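(* For every positive integer $n$, the number $A_n=\frac{8(10^{2^n}-1)}{9}$ (whose decimal representation consists of $2^n$ digits all equal to $8$) is a practical number.
   Context: A positive integer $N$ is called a practical number if every integer in $[1,N]$ can be expressed as a sum of distinct positive divisors of $N$. *)

(* Defs.v *)
From mathcomp Require Import all_boot.
Set Implicit Arguments. Unset Strict Implicit. Unset Printing Implicit Defensive.

(* A collection of distinct divisors is represented as a
   subsequence of the (duplicate-free, sorted) list [divisors N]. *)
Definition practical (N : nat) : Prop :=
  0 < N /\
  forall m : nat, 1 <= m <= N ->
    exists s : seq nat, subseq s (divisors N) /\ \sum_(d <- s) d = m.

Definition A (n : nat) : nat := 8 * (10 ^ (2 ^ n) - 1) %/ 9.

(* Main.v *)
Require Import Defs.
From mathcomp Require Import all_boot.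
From mathcomp Require Import zify.

Definition rep (N x : nat) : Prop :=
  exists s : seq nat, [/\ uniq s, {subset s <= divisors N} & \sum_(d <- s) d = x].

Definition P (N : nat) : Prop := 0 < N /\ forall x, x <= 2 * N - 1 -> rep N x.

Lemma le_sum_mem (s : seq nat) d : d \in s -> d <= \sum_(i <- s) i.
Proof.
elim: s => [|a s IH] //=; rewrite in_cons big_cons => /orP [/eqP->|/IH H].
  exact: leq_addr.
by apply: leq_trans H (leq_addl _ _).
Qed.

Lemma step N k : P N -> 0 < k -> k <= 2 * N -> P (N * k).
Proof.
move=> [N0 HN] k0 kle; split; first by rewrite muln_gt0 N0.
move=> x hx.
have hr : x %% k <= 2 * N - 1.
  have := ltn_pmod x k0; lia.
have hq : x %/ k <= 2 * N - 1.
  have : x %/ k < 2 * N.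
    rewrite ltn_divLR //; lia.
  lia.
have [s1 [u1 sub1 sum1]] := HN _ hr.
have [s2 [u2 sub2 sum2]] := HN _ hq.
exists (s1 ++ map (fun d => d * k) s2); split.
- rewrite cat_uniq u1 map_inj_uniq ?u2; last by move=> a b /eqP; rewrite eqn_pmul2r // => /eqP.
  rewrite andbT /=; apply/hasPn => y /mapP [d dIn ->].
  apply/negP => /le_sum_mem; rewrite sum1 => hle.
  have d0 : 0 < d.
    by move: (sub2 _ dIn); rewrite -dvdn_divisors //; apply: contraTT; rewrite -leqNgt leqn0 => /eqP ->; rewrite dvd0n -lt0n N0.
  have := ltn_pmod x k0; nia.
- move=> y; rewrite mem_cat => /orP [/sub1|/mapP [d /sub2 dIn ->]].
    rewrite -!dvdn_divisors ?muln_gt0 ?N0 ?k0 // => h; exact: dvdn_mulr.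
  by rewrite -!dvdn_divisors ?muln_gt0 ?N0 ?k0 // in dIn *; rewrite dvdn_pmul2r.
- rewrite big_cat big_map /= -big_distrl /= sum1 sum2.
  by rewrite [in RHS](divn_eq x k) addnC.
Qed.

Lemma P1 : P 1.
Proof.
split=> // x hx; case: x hx => [|[|//]] _.
  by exists [::]; split => //; rewrite big_nil.
by exists [:: 1]; split => //; rewrite big_seq1.
Qed.

Fixpoint B (i : nat) : nat := if i is j.+1 then B j * (10 ^ (2 ^ j) + 1) else 8.

Lemma B_eq i : 9 * B i + 8 = 8 * 10 ^ (2 ^ i).
Proof.
elim: i => [//|i IH] /=.
rewrite expnS mul2n -addnn expnD.
move: IH; move: (10 ^ (2 ^ i)) => t IH.
nia.
Qed.

Lemma t_ge i : 10 <= 10 ^ (2 ^ i).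
Proof.
have : 0 < 2 ^ i by rewrite expn_gt0.
case: (2 ^ i) => // m _; rewrite expnS.
have := expn_gt0 10 m; rewrite /=; lia.
Qed.

Lemma PB i : P (B i).
Proof.
elim: i => [|i IH] /=.
  have h := step 1 2 P1 (isT : 0 < 2) (isT : 2 <= 2 * 1).
  have h2 := step _ 2 h (isT : 0 < 2) (isT : 2 <= 2 * (1 * 2)).
  exact: (step _ 2 h2 (isT : 0 < 2) (isT : 2 <= 2 * (1 * 2 * 2))).
apply: step => //; first by rewrite addn1.
have := B_eq i; have := t_ge i; lia.
Qed.

Lemma A_B n : A n = B n.
Proof.
rewrite /A; have := B_eq n; have := t_ge n => h1 h2.
have -> : 8 * (10 ^ 2 ^ n - 1) = 9 * B n by lia.
by rewrite mulKn.
Qed.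

Theorem mainTheorem9 (n : nat) : 0 < n -> practical (A n).
Proof.
move=> _; rewrite A_B; have [B0 HB] := PB n; split => // m /andP [m1 mB].
have [s [us subs sums]] := HB m (ltac:(lia)).
exists [seq d <- divisors (B n) | d \in s]; split; first exact: filter_subseq.
rewrite -sums; apply: perm_big; apply: uniq_perm.
- by rewrite filter_uniq // divisors_uniq.
- exact: us.
- by move=> y; rewrite mem_filter; case yIn: (y \in s) => //=; rewrite subs.
Qed.
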